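(* Let $\mathcal{H}$ be a hypertree and $u,v$ two vertices of it. Then $uv$ is an edge of some host tree of $\mathcal{H}$ if and only if $u$ and $v$ lie in different connected components of the 2-section of $\overline{\mathcal{H}_{uv}}$.
   Context: A hypergraph $\mathcal{H}$ has a finite vertex set $V(\mathcal{H})$ and a finite family of nonempty subsets (edges). A host tree is a tree on $V(\mathcal{H})$ in which every edge induces a connected subgraph; a hypertree is a hypergraph with a host tree. For $A\subseteq V(\mathcal{H})$, $\overline{\mathcal{H}_A}$ is the hypergraph on $V(\mathcal{H})$ whose edges are the edges of $\mathcal{H}$ not containing $A$; $\overline{\mathcal{H}_{uv}}=\overline{\mathcal{H}_{\{u,v\}}}$. The 2-section of a hypergraph is the graph on its vertex set in which two distinct vertices are adjacent iff some edge contains both. *)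

(* Defs.v *)
From mathcomp Require Import all_boot.
Set Implicit Arguments. Unset Strict Implicit. Unset Printing Implicit Defensive.

(* A hypergraph on the finite vertex type V: a finite family E of nonempty
   vertex subsets (the nonemptiness is a hypothesis of the theorem). *)

Definition simple_graph (V : finType) (T : rel V) : Prop :=
  symmetric T /\ irreflexive T.

Definition acyclic (V : finType) (T : rel V) : Prop :=
  forall c : seq V, 3 <= size c -> uniq c -> ~~ cycle T c.

Definition graph_connected (V : finType) (T : rel V) : Prop :=
  forall x y : V, connect T x y.

Definition is_tree (V : finType) (T : rel V) : Prop :=
  [/\ simple_graph T, graph_connected T & acyclic T].

Definition induced (V : finType) (T : rel V) (e : {set V}) : rel V :=
  [rel a b | [&& a \in e, b \in e & T a b]].

Definition induces_connected (V : finType) (T : rel V) (e : {set V}) : Prop :=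
  forall x y, x \in e -> y \in e -> connect (induced T e) x y.

Definition host_tree (V : finType) (E : {set {set V}}) (T : rel V) : Prop :=
  is_tree T /\ forall e, e \in E -> induces_connected T e.

Definition hypertree (V : finType) (E : {set {set V}}) : Prop :=
  exists T : rel V, host_tree E T.

(* \overline{H_A}: the edges of H not containing A (same vertex set V). *)
Definition Hbar (V : finType) (E : {set {set V}}) (A : {set V}) : {set {set V}} :=
  [set e in E | ~~ (A \subset e)].

Definition two_section (V : finType) (E : {set {set V}}) : rel V :=
  [rel a b | (a != b) && [exists e in E, (a \in e) && (b \in e)]].

(* Main.v *)
Require Import Defs.
From mathcomp Require Import all_boot.
Set Implicit Arguments. Unset Strict Implicit. Unset Printing Implicit Defensive.

Section Aux.
Variable V : finType.
Implicit Types (T : rel V).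

Definition pr (x y s t : V) := ((s == x) && (t == y)) || ((s == y) && (t == x)).
Definition rm T x y : rel V := [rel s t | T s t && ~~ pr x y s t].

Lemma prC x y s t : pr x y s t = pr y x s t.
Proof. by rewrite /pr orbC. Qed.

Lemma pr_swap x y s t : pr x y s t = pr x y t s.
Proof. by rewrite /pr orbC andbC [(t == y) && _]andbC. Qed.

Lemma rmC T x y : rm T x y =2 rm T y x.
Proof. by move=> s t; rewrite /rm /= prC. Qed.

Lemma rm_sym T x y : symmetric T -> symmetric (rm T x y).
Proof. by move=> sT s t; rewrite /rm /= sT pr_swap. Qed.

Lemma rm_sub T x y : subrel (rm T x y) T.
Proof. by move=> s t /andP[]. Qed.

Lemma path_avoid T x y z s w :
  (forall a, a \in z :: s -> (a != x) && (a != y)) ->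
  path T z (rcons s w) -> path (rm T x y) z (rcons s w).
Proof.
elim: s z => [|a s IH] z H /=.
  rewrite !andbT => Tzw; rewrite /rm /= Tzw /pr.
  by case/andP: (H z (mem_head _ _)) => /negPf -> /negPf ->.
case/andP=> Tza P; rewrite {1}/rm /= Tza /= IH //; last first.
  by move=> b bin; apply: H; rewrite inE bin orbT.
by rewrite /pr; case/andP: (H z (mem_head _ _)) => /negPf -> /negPf ->.
Qed.

Lemma bridge T x y : symmetric T -> acyclic T -> T x y -> x != y ->
  ~~ connect (rm T x y) x y.
Proof.
move=> sT aT Txy nxy; apply/negP => /connectP [p pp lp].
move: lp; case: (shortenP pp) => p' pp' up' _ lp'.
have sz : 3 <= size (x :: p').
  case: p' pp' up' lp' => [|z [|w q]] //=.
  - by move=> _ _ ye; move: nxy; rewrite ye eqxx.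
  - rewrite andbT /rm /pr /= => /andP[_ /negP H] _ ye; exfalso; apply: H.
    by rewrite ye !eqxx.
have := aT _ sz up'; rewrite /= rcons_path -lp' sT Txy andbT.
by rewrite (sub_path (@rm_sub T x y) pp').
Qed.

Lemma cyc_bridge T x y c : symmetric T -> uniq c -> 2 < size c -> cycle T c ->
  ~~ cycle (rm T x y) c -> connect (rm T x y) x y.
Proof.
move=> sT uc sc cT ncR.
have [p pc np] : exists2 p, p \in c & ~~ rm T x y p (next c p).
  case: (boolP (all (fun p => rm T x y p (next c p)) c)) => [/allP H|/allPn [p pc np]].
    by rewrite (cycle_from_next uc H) in ncR.
  by exists p.
have Tpq := next_cycle cT pc.
move: np; rewrite /rm /= Tpq /= negbK => prp.
case: (rot_to pc) => i s hs.
have us : uniq (p :: s) by rewrite -hs rot_uniq.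
have cs : cycle T (p :: s) by rewrite -hs rot_cycle.
have ss : 2 < size (p :: s) by rewrite -hs size_rot.
have nq : next (p :: s) p = next c p by rewrite -hs next_rot.
move: nq prp us cs ss; set q := next c p; clear hs.
case: s => [|q' [|r s]] //=; rewrite eqxx => <- {q}.
rewrite !inE !negb_or => prp /andP[/and3P[npq npr nps] /andP[/andP[nqr nqs] us]].
case/andP=> Tpq' cs _.
have key : forall x y, (p == x) && (q' == y) || (p == y) && (q' == x) ->
    connect (rm T x y) q' p.
  move=> x0 y0 h.
  apply: (path_connect (p := r :: rcons s p)); last first.
    by rewrite 2!in_cons mem_rcons mem_head !orbT.
  case/andP: cs => Tqr cs.
  have hr : (r != x0) && (r != y0).
    by case/orP: h => /andP[/eqP <- /eqP <-]; rewrite ![r == _]eq_sym npr nqr.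
  rewrite /= {1}/rm /= Tqr /pr /=.
  case/andP: (hr) => /negPf -> /negPf ->; rewrite !andbF /=.
  apply: path_avoid cs => a.
  rewrite inE => /orP[/eqP -> //|ain].
  by case/orP: h => /andP[/eqP <- /eqP <-]; rewrite (memPn nps _ ain) (memPn nqs _ ain).
case/orP: (prp) => /andP[/eqP px /eqP qy].
  have := key x y; rewrite px qy !eqxx /= => /(_ isT) H.
  by rewrite (sym_connect_sym (rm_sym x y sT) x y).
have := key y x; rewrite px qy !eqxx /= => /(_ isT).
by rewrite (eq_connect (rmC T y x)).
Qed.

Lemma split_path T (C : pred V) z p : path T z p -> uniq (z :: p) -> C z ->
  ~~ C (last z p) -> exists a b, [/\ C a, ~~ C b, T a b, a \in z :: p &
     [/\ b \in z :: p, connect (rm T a b) z a & connect (rm T a b) b (last z p)]].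
Proof.
elim: p z => [|y p IH] z /=; first by move=> _ _ ->.
move=> /andP[Tzy pp] /andP[nz up] Cz Cl.
case: (boolP (C y)) => Cy.
  have [a [b [Ca Cb Tab ain [bin cya cbl]]]] := IH y pp up Cy Cl.
  exists a, b; split => //; first by rewrite inE ain orbT.
  split => //; first by rewrite inE bin orbT.
  apply: connect_trans cya; apply: connect1; rewrite /rm /= Tzy /pr.
  have za : (z == a) = false by apply/negP => /eqP zae; rewrite zae ain in nz.
  have zb : (z == b) = false by apply/negP => /eqP zbe; rewrite zbe bin in nz.
  by rewrite za zb.
exists z, y; split => //; first exact: mem_head.
split; [by rewrite inE mem_head orbT | exact: connect0 |].
have : path (rm T z y) y p.
  apply: (sub_in_path (P := predC1 z)) pp => [s t|].
    rewrite !inE => sz tz Tst; rewrite /rm /= Tst /pr.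
    by rewrite (negPf sz) (negPf tz) andbF.
  by apply/allP => w win /=; apply: contraNneq nz => <-.
move/path_connect; apply; exact: mem_last.
Qed.

Lemma side T a b w (e : {set V}) : symmetric T -> ~~ connect (rm T a b) a b ->
  connect (rm T a b) a w -> connect (induced T e) a w ->
  connect (induced (rm T a b) e) a w.
Proof.
move=> sT br caw /connectP[p pp lp].
have nab : a != b by apply: contraNneq br => ->; exact: connect0.
move: lp; case: (shortenP pp) => {pp} p pp up _ lp.
case: (boolP (b \in p)) => bp.
  exfalso; case/splitPr: bp pp up lp => p1 p2.
  rewrite cat_path /= => /and3P[_ _ pp2].
  rewrite mem_cat negb_or => /andP[/andP[_ na] _].
  rewrite last_cat /= => lp.
  have : path (rm T a b) b p2.
    apply: (sub_in_path (P := predC1 a)) pp2 => [s t|].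
      rewrite !inE => sa ta /and3P[_ _ Tst]; rewrite /rm /= Tst /pr.
      by rewrite (negPf sa) (negPf ta) /= andbF.
    apply/allP => z zin; rewrite inE; apply: contraNneq na => <-; exact: zin.
  move/path_connect => /(_ w); rewrite lp mem_last => /(_ isT) cbw.
  move/negP: br; apply; apply: connect_trans caw _.
  by rewrite lp (sym_connect_sym (rm_sym a b sT)).
rewrite lp; apply: (path_connect (p := p)); last exact: mem_last.
apply: (sub_in_path (P := predC1 b)) pp => [s t|].
  rewrite !inE => sb tb /and3P[se te Tst]; rewrite /induced /= se te /rm /= Tst /pr.
  by rewrite (negPf sb) (negPf tb) /= !andbF.
by rewrite /= nab; apply/allP => z zin /=; apply: contraNneq bp => <-.
Qed.

End Aux.

Theorem mainTheorem10 (V : finType) (E : {set {set V}})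
  (HE : forall e, e \in E -> e != set0)
  (Htree : hypertree E) (u v : V) :
  (exists T : rel V, host_tree E T /\ T u v) <->
  ~~ connect (two_section (Hbar E [set u; v])) u v.
Proof.
split.
- case=> T [[[[sT iT] cT aT] hT] Tuv].
  have nuv : u != v by apply/eqP => ee; rewrite ee iT in Tuv.
  have := bridge sT aT Tuv nuv; apply: contra.
  apply: connect_sub => s t /= /andP[nst /exists_inP [e eH /andP[se te]]].
  move: eH; rewrite inE => /andP[eE nsub].
  apply: (connect_sub _ (hT e eE s t se te)) => a b /and3P[ae be Tab].
  apply: connect1; rewrite /rm /= Tab /pr /=.
  apply/negP => H; apply: (negP nsub); apply/subsetP => z; rewrite !inE.
  by case/orP: H => /andP[/eqP <- /eqP <-] /orP[] /eqP ->.
- move=> nc; case: Htree => T0 [[[sT iT] cT aT] hT].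
  set G := two_section _ in nc.
  have nuv : u != v by apply: contraNneq nc => ->; exact: connect0.
  have [p pp lp] := connectP (cT u v).
  move: lp; case: (shortenP pp) => {pp} p pp up _ lp.
  have := @split_path _ T0 (connect G u) u p pp up (connect0 _ _).
  rewrite -lp => /(_ nc) [a [b [aC bC Tab _ [_ cua cbv]]]].
  set R0 := rm T0 a b in cua cbv.
  set T := [rel x y | R0 x y || pr u v x y].
  have nab : a != b by apply/eqP => ee; rewrite ee iT in Tab.
  have br := bridge sT aT Tab nab.
  have sR0 : symmetric R0 := rm_sym a b sT.
  have csR0 := sym_connect_sym sR0.
  have sT' : symmetric T by move=> x y; rewrite /T /= sR0 pr_swap.
  have R0T : subrel R0 T by move=> x y /= ->.
  have cab : connect T a b.
    apply: connect_trans (_ : connect T a u) _.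
      by rewrite csR0 in cua; apply: (connect_sub _ cua) => x y /R0T /connect1.
    apply: connect_trans (_ : connect T u v) _.
      by apply: connect1; rewrite /T /= /pr !eqxx orbT.
    by rewrite csR0 in cbv; apply: (connect_sub _ cbv) => x y /R0T /connect1.
  exists T; split; last by rewrite /T /= /pr !eqxx orbT.
  split; [split; [split|..]|].
  + exact: sT'.
  + move=> x; rewrite /T /= /R0 /rm /= iT /pr /=.
    by apply/negP => /orP[] /andP[/eqP xu /eqP xv]; move: nuv; rewrite -xu -xv eqxx.
  + move=> x y; apply: (connect_sub _ (cT x y)) => s t Tst.
    case: (boolP (pr a b s t)) => H.
      case/orP: H => /andP[/eqP -> /eqP ->] //.
      by rewrite (sym_connect_sym sT').
    by apply: connect1; rewrite /T /= /R0 /rm /= Tst H.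
  + move=> c sc uc; apply/negP => cTc.
    case: (boolP (cycle R0 c)) => cR.
      by have := aT c sc uc; rewrite (sub_cycle (@rm_sub _ T0 a b) cR).
    have : connect (rm T u v) u v.
      apply: (cyc_bridge (c := c)) => //; move: cR; apply: contra; apply: sub_cycle.
      by move=> x y /andP[/orP[] // H1 H2]; rewrite H1 in H2.
    have sub1 : subrel (rm T u v) R0.
      by move=> x y /andP[/orP[] // H1 H2]; rewrite H1 in H2.
    move=> cuv; move/negP: br; apply.
    apply: connect_trans (_ : connect R0 a u) _; first by rewrite csR0.
    apply: (connect_trans (_ : connect R0 u v)); last by rewrite csR0.
    by apply: (connect_sub _ cuv) => x y /sub1 /connect1.
  + move=> e eE x y xe ye.
    case: (boolP ([set u; v] \subset e)) => sub.
      have ue : u \in e by apply: (subsetP sub); rewrite !inE eqxx.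
      have ve : v \in e by apply: (subsetP sub); rewrite !inE eqxx orbT.
      have sTe : symmetric (induced T e).
        by move=> s t; rewrite /induced /= sR0 pr_swap andbCA.
      apply: (connect_sub _ (hT e eE x y xe ye)) => s t /and3P[se te Tst].
      case: (boolP (pr a b s t)) => H; last first.
        by apply: connect1; rewrite /induced /= se te /T /= /R0 /rm /= Tst H.
      have [ae be] : a \in e /\ b \in e.
        by case/orP: H => /andP[/eqP <- /eqP <-].
      have c1 : connect (induced T e) a u.
        have := side sT br (_ : connect R0 a u) (hT e eE a u ae ue).
        rewrite csR0 => /(_ cua); apply: connect_sub => s' t' H'.
        by apply: connect1; move: H'; rewrite /induced /= => /and3P[-> -> h3]; apply/orP; left.
      have c2 : connect (induced T e) b v.
        have br' : ~~ connect (rm T0 b a) b a.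
          by rewrite -(eq_connect (rmC T0 a b)) -csR0.
        have := side sT br' (_ : connect (rm T0 b a) b v) (hT e eE b v be ve).
        rewrite (eq_connect (rmC T0 b a)) => /(_ cbv); apply: connect_sub => s' t' H'.
        apply: connect1; move: H'; rewrite /induced /= => /and3P[-> -> H2].
        by rewrite /T /= /R0 rmC H2.
      have c3 : connect (induced T e) a b.
        apply: connect_trans c1 _; apply: connect_trans (_ : connect _ u v) _.
          by apply: connect1; rewrite /induced /= ue ve /T /= /pr !eqxx orbT.
        by rewrite (sym_connect_sym sTe).
      case/orP: H => /andP[/eqP -> /eqP ->] //.
      by rewrite (sym_connect_sym sTe).
    have eH : e \in Hbar E [set u; v] by rewrite inE eE sub.
    have memC : forall s t, s \in e -> t \in e -> connect G u s -> connect G u t.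
      move=> s t se te cs; case: (eqVneq s t) => [<- //|nst].
      apply: connect_trans cs (connect1 _).
      by rewrite /G /two_section /= nst; apply/exists_inP; exists e => //; rewrite se te.
    apply: (connect_sub _ (hT e eE x y xe ye)) => s t /and3P[se te Tst].
    apply: connect1; rewrite /induced /= se te /T /= /R0 /rm /= Tst /=.
    apply/orP; left; apply/negP => /orP[] /andP[/eqP sa /eqP tb].
      by move: bC; rewrite -tb (memC s t se te) // sa.
    by move: bC; rewrite -sa (memC t s te se) // tb.
Qed.
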